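(* Let $\mathcal{H}$ be a finite class of classifiers $h:\mathcal{X}\times\{-1,1\}\to\{0,1\}$ containing the two classifiers $\mathbf{1}[a=1]$ and $\mathbf{1}[a=-1]$, and suppose $\gamma>2\nu>0$. Let $\mathrm{OPT}$ be the optimal value of $$\min_{\pi\in\Delta(\mathcal{H})}\mathbb{E}_{h\sim\pi}\Big[\sum_{j=1}^n w_j\mathbf{1}\{h(X_j)\neq Y_j\}\Big]\ \text{ s.t. }\ \forall j\in\{\pm1\}:\ \mathrm{FPR}_j(\pi)-\mathrm{FPR}_{-j}(\pi)\le\gamma,$$ and let $\mathrm{OPT}'$ be the optimal value of the same problem with $\gamma$ replaced by $\gamma-2\nu$. Then $\mathrm{OPT}'-\mathrm{OPT}\le2\nu$.
   Context: $X_j=(\hat x_j,a_j)$ are points, $Y_j\in\{0,1\}$ labels, $w_j\ge0$ weights with $\sum_j w_j=1$. $\mathcal{D}_E$ is a fixed empirical distribution of labeled examples $(\hat x,a,y)$ containing negative examples of both groups, and $\mathrm{FPR}_j(\pi)=\mathbb{E}_{h\sim\pi}[\Pr_{\mathcal{D}_E}(h(x)=1\mid a=j,y\text{ negative})]$ for $\pi\in\Delta(\mathcal{H})$, the set of distributions over $\mathcal{H}$. *)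

(* Defs.v *)
From mathcomp Require Import all_boot all_order all_algebra.
Set Implicit Arguments. Unset Strict Implicit. Unset Printing Implicit Defensive.
Import Order.TTheory GRing.Theory Num.Theory.
Local Open Scope ring_scope.

(* Group attribute a in {-1,1} is encoded as a bool: true <-> a = 1,
   false <-> a = -1 (so "-j" is "~~ j").  Labels Y in {0,1} are bools
   (false = 0 = negative). The finite class H is given as a finite
   index type H with interpretation cls : H -> (X -> bool -> bool). *)

Section Defs.
Variables (R : realFieldType) (X : Type) (H : finType)
          (cls : H -> X -> bool -> bool).

Definition is_distr (pi : {ffun H -> R}) : Prop :=
  (forall h, 0 <= pi h) /\ \sum_(h : H) pi h = 1.

Definition werr (n : nat) (Xs : 'I_n -> X * bool) (Ys : 'I_n -> bool)
  (w : 'I_n -> R) (pi : {ffun H -> R}) : R :=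
  \sum_(h : H) pi h *
    \sum_(j < n) w j * (cls h (Xs j).1 (Xs j).2 != Ys j)%:R.

(* The empirical distribution D_E is uniform over a finite sample
   (with multiplicities) of labeled examples (xhat, a, y). *)
Definition neg_of (S : seq (X * bool * bool)) (g : bool) :=
  [seq e <- S | (e.1.2 == g) && ~~ e.2].

Definition fpr_h (S : seq (X * bool * bool)) (h : H) (g : bool) : R :=
  (count (fun e : X * bool * bool => cls h e.1.1 e.1.2) (neg_of S g))%:R
  / (size (neg_of S g))%:R.

Definition FPR (S : seq (X * bool * bool)) (g : bool) (pi : {ffun H -> R}) : R :=
  \sum_(h : H) pi h * fpr_h S h g.

Definition feasible (S : seq (X * bool * bool)) (gamma : R)
  (pi : {ffun H -> R}) : Prop :=
  is_distr pi /\ forall g : bool, FPR S g pi - FPR S (~~ g) pi <= gamma.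

Definition is_opt_value (n : nat) (Xs : 'I_n -> X * bool) (Ys : 'I_n -> bool)
  (w : 'I_n -> R) (S : seq (X * bool * bool)) (gamma : R) (v : R) : Prop :=
  (exists pi, feasible S gamma pi /\ werr Xs Ys w pi = v) /\
  (forall pi, feasible S gamma pi -> v <= werr Xs Ys w pi).

End Defs.

(* Main.v *)
Require Import Defs.
From mathcomp Require Import all_boot all_order all_algebra.
From mathcomp Require Import ring lra.
Import Order.TTheory GRing.Theory Num.Theory.
Local Open Scope ring_scope.

Section Aux.
Variables (R : realFieldType) (X : Type) (H : finType)
          (cls : H -> X -> bool -> bool).

Definition mix (pi : {ffun H -> R}) (t : R) (h : H) : {ffun H -> R} :=
  [ffun k => (1 - t) * pi k + t * (k == h)%:R].

Lemma mix_sum pi t h (F : H -> R) :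
  \sum_k mix pi t h k * F k = (1 - t) * \sum_k pi k * F k + t * F h.
Proof.
under eq_bigr do rewrite ffunE mulrDl.
rewrite big_split /=; congr (_ + _).
  by rewrite mulr_sumr; apply: eq_bigr => k _; rewrite mulrA.
rewrite (bigD1 h) //= eqxx mulr1 big1 ?addr0 // => k /negbTE ->.
by rewrite mulr0 mul0r.
Qed.

Lemma fpr_bad S g h : (forall x a, cls h x a = (a != g)) ->
  (0 < size (neg_of S g))%N -> (0 < size (neg_of S (~~ g)))%N ->
  fpr_h R cls S h g = 0 /\ fpr_h R cls S h (~~ g) = 1.
Proof.
move=> Hh s1 s2; rewrite /fpr_h; split.
  have -> : count (fun e : X * bool * bool => cls h e.1.1 e.1.2) (neg_of S g) = 0%N.
    rewrite /neg_of; elim: S {s1 s2} => //= e s IH.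
    case: ifP => //= /andP [/eqP E _]; by rewrite IH Hh E eqxx.
  by rewrite mul0r.
have -> : count (fun e : X * bool * bool => cls h e.1.1 e.1.2) (neg_of S (~~ g))
    = size (neg_of S (~~ g)).
  rewrite /neg_of; elim: S {s1 s2} => //= e s IH.
  case: ifP => //= /andP [/eqP E _]; rewrite IH Hh E.
  by case: g {Hh IH E}.
by rewrite divff // pnatr_eq0 -lt0n.
Qed.

Lemma werr_ge0 n (Xs : 'I_n -> X * bool) Ys (w : 'I_n -> R) pi :
  (forall j, 0 <= w j) -> is_distr pi -> 0 <= werr cls Xs Ys w pi.
Proof.
move=> hw [hp _]; apply: sumr_ge0 => k _; apply: mulr_ge0 => //.
by apply: sumr_ge0 => j _; apply: mulr_ge0.
Qed.

Lemma werr1_le n (Xs : 'I_n -> X * bool) Ys (w : 'I_n -> R) h :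
  (forall j, 0 <= w j) -> \sum_(j < n) w j = 1 ->
  \sum_(j < n) w j * (cls h (Xs j).1 (Xs j).2 != Ys j)%:R <= 1.
Proof.
move=> hw h1; rewrite -[X in _ <= X]h1; apply: ler_sum => j _.
by case: (cls h _ _ != Ys j); rewrite ?mulr1 ?mulr0.
Qed.

Lemma fix_step n (Xs : 'I_n -> X * bool) Ys (w : 'I_n -> R) S g h pi
  (gamma nu : R) :
  0 < nu -> 2 * nu < gamma -> (forall x a, cls h x a = (a != g)) ->
  (0 < size (neg_of S g))%N -> (0 < size (neg_of S (~~ g)))%N ->
  (forall j, 0 <= w j) -> \sum_(j < n) w j = 1 ->
  feasible cls S gamma pi ->
  gamma - 2 * nu < FPR cls S g pi - FPR cls S (~~ g) pi ->
  exists pi', feasible cls S (gamma - 2 * nu) pi' /\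
    werr cls Xs Ys w pi' <= werr cls Xs Ys w pi + 2 * nu.
Proof.
move=> hnu hgn Hh s1 s2 hw0 hw1 [[hp hs] hf] hD.
have [f0 f1] := fpr_bad _ _ _ Hh s1 s2.
set D := FPR cls S g pi - FPR cls S (~~ g) pi in hD.
have hDg : D <= gamma by apply: hf.
have hD1 : 0 < 1 + D by lra.
set t := (D - (gamma - 2 * nu)) / (1 + D).
have ht : t * (1 + D) = D - (gamma - 2 * nu).
  by rewrite /t divfK // gt_eqF.
have t0 : 0 <= t by rewrite /t divr_ge0 //; lra.
have t2 : t <= 2 * nu.
  rewrite /t ler_pdivrMr //; nra.
have t1 : t <= 1 by rewrite /t ler_pdivrMr //; lra.
exists (mix pi t h); split; first split.
- split.
    by move=> k; rewrite ffunE; apply: addr_ge0; apply: mulr_ge0;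
      rewrite ?subr_ge0 ?ler0n.
  have := mix_sum pi t h (fun _ => 1).
  under eq_bigr do rewrite mulr1.
  move=> ->; under eq_bigr do rewrite mulr1.
  by rewrite hs; lra.
- have Eg : FPR cls S g (mix pi t h) = (1 - t) * FPR cls S g pi.
    by rewrite /FPR mix_sum f0 mulr0 addr0.
  have Eng : FPR cls S (~~ g) (mix pi t h) = (1 - t) * FPR cls S (~~ g) pi + t.
    by rewrite /FPR mix_sum f1 mulr1.
  move=> g'; case: (boolP (g' == g)) => [/eqP -> | hg'].
    rewrite Eg Eng.
    have -> : (1 - t) * FPR cls S g pi - ((1 - t) * FPR cls S (~~ g) pi + t)
      = D - t * (1 + D) by rewrite /D; ring.
    by rewrite ht; lra.
  have -> : g' = ~~ g by case: g g' hg' {Hh s1 s2 f0 f1 hD D hDg hD1 t ht t0 t2 t1 Eg Eng} => [] [].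
  rewrite negbK Eg Eng.
  have -> : (1 - t) * FPR cls S (~~ g) pi + t - (1 - t) * FPR cls S g pi
      = - (D - t * (1 + D)) by rewrite /D; ring.
  by rewrite ht; lra.
- rewrite /werr mix_sum.
  have e1 := werr1_le n Xs Ys w h hw0 hw1.
  have e0 := werr_ge0 n Xs Ys w pi hw0 (conj hp hs).
  move: e0; rewrite /werr => e0.
  set E := \sum_k _ in e0 *.
  set e := \sum_(j < n) _ in e1 *.
  have : 0 <= e by apply: sumr_ge0 => j _; apply: mulr_ge0; rewrite ?ler0n.
  nra.
Qed.

End Aux.

Theorem lemma11 (R : realFieldType) (X : Type) (H : finType)
  (cls : H -> X -> bool -> bool)
  (Hpos : exists h1 : H, forall x a, cls h1 x a = a)
  (Hneg : exists h2 : H, forall x a, cls h2 x a = ~~ a)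
  (n : nat) (Xs : 'I_n -> X * bool) (Ys : 'I_n -> bool) (w : 'I_n -> R)
  (hw0 : forall j, 0 <= w j) (hw1 : \sum_(j < n) w j = 1)
  (S : seq (X * bool * bool))
  (hS : forall g : bool, (0 < size (neg_of S g))%N)
  (gamma nu : R) (hnu : 0 < nu) (hgn : 2 * nu < gamma)
  (OPT OPT' : R)
  (hOPT : is_opt_value cls Xs Ys w S gamma OPT)
  (hOPT' : is_opt_value cls Xs Ys w S (gamma - 2 * nu) OPT') :
  OPT' - OPT <= 2 * nu.
Proof.
case: hOPT => [[pi [hf <-]] _]; case: hOPT' => [_ hmin].
case: Hpos => h1 H1; case: Hneg => h2 H2.
have step : forall g h, (forall x a, cls h x a = (a != g)) ->
    gamma - 2 * nu < FPR cls S g pi - FPR cls S (~~ g) pi ->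
    OPT' - werr cls Xs Ys w pi <= 2 * nu.
  move=> g h Hh hD.
  have [pi' [hf' hle]] := @fix_step R X H cls n Xs Ys w S g h pi gamma nu hnu hgn Hh (hS g) (hS (~~ g)) hw0 hw1 hf hD.
  have := hmin _ hf'; lra.
case: (ltrP (gamma - 2 * nu) (FPR cls S true pi - FPR cls S (~~ true) pi)) => hT.
  by apply: (step true h2) => // x a; rewrite H2; case: a.
case: (ltrP (gamma - 2 * nu) (FPR cls S false pi - FPR cls S (~~ false) pi)) => hF.
  by apply: (step false h1) => // x a; rewrite H1; case: a.
have : feasible cls S (gamma - 2 * nu) pi.
  split; first by case: hf.
  by case.
move/hmin; lra.
Qed.
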